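(* Let $S$ be a subspace of $\mathcal{A}\otimes\mathcal{B}$ (finite-dimensional). If there is a PPT-definite operator $\sigma$ with $\operatorname{supp}(\sigma)\subseteq S$, then $S$ is strongly PPT-unextendible.
   Context: A bipartite positive semidefinite operator $E\in\mathcal{L}(\mathcal{A}\otimes\mathcal{B})$ is PPT if its partial transpose $E^{T_B}$ (defined by $(|i\rangle\langle k|\otimes|j\rangle\langle l|)^{T_B}=|i\rangle\langle k|\otimes|l\rangle\langle j|$) is positive semidefinite, and PPT-definite if $E\ge 0$ and $E^{T_B}$ is positive definite. A subspace $S\subseteq\mathcal{A}\otimes\mathcal{B}$ is PPT-extendible if there exists a nonzero PPT operator whose support is contained in the orthogonal complement $S^\perp$; $S$ is strongly PPT-unextendible if for every positive integer $k$, $S^{\otimes k}\subseteq\mathcal{A}^{\otimes k}\otimes\mathcal{B}^{\otimes k}$ is not PPT-extendible (with respect to the bipartition $\mathcal{A}^{\otimes k}:\mathcal{B}^{\otimes k}$). *)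

(* Defs.v *)
From HB Require Import structures.
From mathcomp Require Import all_boot all_order all_algebra.
Set Implicit Arguments. Unset Strict Implicit. Unset Printing Implicit Defensive.
Import Order.TTheory GRing.Theory Num.Theory.
Local Open Scope ring_scope.

(* vectors of A (x) B, with A = C^I and B = C^J; index (i,j) is |i>|j> *)
Notation vec C I J := {ffun (I * J)%type -> C}.
(* operators on A (x) B, given by matrix entries E((i,j),(k,l)) = <i,j|E|k,l> *)
Notation op C I J := {ffun ((I * J) * (I * J))%type -> C}.

Section Defs.
Variable C : numClosedFieldType.

Variables I J : finType.

Definition scalv (a : C) (v : vec C I J) : vec C I J := [ffun x => a * v x].

Definition inner (u v : vec C I J) : C := \sum_x (u x)^* * v x.

Definition apply (E : op C I J) (v : vec C I J) : vec C I J :=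
  [ffun x => \sum_y E (x, y) * v y].

Definition psd (E : op C I J) : Prop := forall v : vec C I J, 0 <= inner v (apply E v).
Definition pd (E : op C I J) : Prop :=
  forall v : vec C I J, v != 0 -> 0 < inner v (apply E v).

(* partial transpose on B:
   (|i><k| (x) |j><l|)^{T_B} = |i><k| (x) |l><j| *)
Definition ptrans (E : op C I J) : op C I J :=
  [ffun p => E (((p.1).1, (p.2).2), ((p.2).1, (p.1).2))].

Definition PPT (E : op C I J) : Prop := psd E /\ psd (ptrans E).
Definition PPT_definite (E : op C I J) : Prop := psd E /\ pd (ptrans E).

Definition is_subspace (S : vec C I J -> Prop) : Prop :=
  [/\ S 0, (forall u v, S u -> S v -> S (u + v)) & (forall (a : C) v, S v -> S (scalv a v))].

(* support (= range) of an operator *)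
Definition supp (E : op C I J) : vec C I J -> Prop :=
  fun w => exists v, w = apply E v.

Definition orth (S : vec C I J -> Prop) : vec C I J -> Prop :=
  fun w => forall s, S s -> inner s w = 0.

Definition span (G : vec C I J -> Prop) : vec C I J -> Prop :=
  fun w => exists s : seq (C * vec C I J),
      (forall p, p \in s -> G p.2) /\ w = \sum_(p <- s) scalv p.1 p.2.

Definition PPT_extendible (S : vec C I J -> Prop) : Prop :=
  exists E : op C I J, E != 0 /\ PPT E /\ (forall w, supp E w -> orth S w).

End Defs.

(* k-fold tensor power: (A (x) B)^{(x) k} is identified with
   A^{(x) k} (x) B^{(x) k}, basis vectors indexed by pairs (a, b) with
   a : 'I_k -> I, b : 'I_k -> J. *)
Definition tens (C : numClosedFieldType) (I J : finType) (k : nat)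
  (vs : 'I_k -> vec C I J) : vec C {ffun 'I_k -> I} {ffun 'I_k -> J} :=
  [ffun p : ({ffun 'I_k -> I} * {ffun 'I_k -> J})%type =>
     \prod_(t < k) vs t (p.1 t, p.2 t)].

Definition tpow (C : numClosedFieldType) (I J : finType) (k : nat)
  (S : vec C I J -> Prop) : vec C {ffun 'I_k -> I} {ffun 'I_k -> J} -> Prop :=
  span (fun w => exists vs : 'I_k -> vec C I J,
          (forall t, S (vs t)) /\ w = tens vs).

Arguments tpow {C I J} k S.

Definition strongly_PPT_unextendible (C : numClosedFieldType) (I J : finType)
  (S : vec C I J -> Prop) : Prop :=
  forall k : nat, (0 < k)%N -> ~ PPT_extendible (tpow k S).

(* Main.v *)
Require Import Defs.
From HB Require Import structures.
From mathcomp Require Import all_boot all_order all_algebra.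
From mathcomp Require Import ring.
Import Order.TTheory GRing.Theory Num.Theory.
Set Implicit Arguments. Unset Strict Implicit. Unset Printing Implicit Defensive.
Local Open Scope ring_scope.
Local Open Scope sesquilinear_scope.

Lemma sumd_r (C : numClosedFieldType) (T : finType) (F : T -> C) (c : C) (x : T) :
  \sum_w F w * (c * (w == x)%:R) = F x * c.
Proof.
rewrite (bigD1 x) //= eqxx mulr1 big1 ?addr0 // => w /negbTE ->.
by rewrite mulr0 mulr0.
Qed.

Lemma sumd_l (C : numClosedFieldType) (T : finType) (G : T -> C) (c : C) (x : T) :
  \sum_w (c * (w == x)%:R)^* * G w = c^* * G x.
Proof.
rewrite (bigD1 x) //= eqxx mulr1 big1 ?addr0 // => w /negbTE ->.
by rewrite mulr0 conjC0 mul0r.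
Qed.

Lemma form2 (C : numClosedFieldType) (I J : finType) (E : op C I J) x y (a b : C) :
  let u := [ffun z => a * (z == x)%:R + b * (z == y)%:R] in
  inner u (apply E u) = a^* * a * E (x,x) + a^* * b * E (x,y)
                        + b^* * a * E (y,x) + b^* * b * E (y,y).
Proof.
move=> u; rewrite /inner /u.
under eq_bigr => z _.
  rewrite /apply !ffunE.
  under eq_bigr => w _ do rewrite ffunE mulrDr.
  rewrite big_split /= !sumd_r rmorphD /= mulrDl.
  over.
rewrite big_split /=.
under eq_bigr => z _ do rewrite mulrDr.
rewrite big_split /= sumd_l.
under [X in _ + X = _]eq_bigr => z _ do rewrite mulrDr.
rewrite big_split /= sumd_l.
rewrite !sumd_l; ring.
Qed.

Lemma psd_herm (C : numClosedFieldType) (I J : finType) (E : op C I J) :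
  psd E -> forall x y, E (y,x) = (E (x,y))^*.
Proof.
move=> hE x y.
pose e (a b : C) := a^* * a * E (x,x) + a^* * b * E (x,y)
                        + b^* * a * E (y,x) + b^* * b * E (y,y).
have R a b : (e a b)^* = e a b.
  by rewrite /e -form2; apply: geC0_conj; apply: hE.
have Rxx : (E (x,x))^* = E (x,x).
  have -> : E (x,x) = e 1 0 by rewrite /e conjC1 conjC0; ring.
  exact: R.
have Ryy : (E (y,y))^* = E (y,y).
  have -> : E (y,y) = e 0 1 by rewrite /e conjC1 conjC0; ring.
  exact: R.
have h1 : (E (x, x) + E (x, y) + E (y, x) + E (y, y))^* = E (x, x) + E (x, y) + E (y, x) + E (y, y).
  have -> : E (x, x) + E (x, y) + E (y, x) + E (y, y) = e 1 1 by rewrite /e conjC1; ring.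
  exact: R.
have h2 : (E (x, x) + 'i * E (x, y) + - 'i * E (y, x) + - 'i * 'i * E (y, y))^* = E (x, x) + 'i * E (x, y) + - 'i * E (y, x) + - 'i * 'i * E (y, y).
  have -> : E (x, x) + 'i * E (x, y) + - 'i * E (y, x) + - 'i * 'i * E (y, y) = e 1 'i by rewrite /e conjC1 conjCi; ring.
  exact: R.
rewrite !rmorphD !rmorphM /= ?rmorphN /= ?conjCi ?opprK Rxx Ryy in h1 h2.
have H : 'i * 2 * ((E (x,y))^* - E (y,x)) =
   'i * ((E (x, x) + (E (x, y))^* + (E (y, x))^* + E (y, y)) - (E (x, x) + E (x, y) + E (y, x) + E (y, y)))
   - ((E (x, x) + - 'i * (E (x, y))^* + 'i * (E (y, x))^* + 'i * - 'i * E (y, y))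
      - (E (x, x) + 'i * E (x, y) + - 'i * E (y, x) + - 'i * 'i * E (y, y))).
  ring.
rewrite h1 h2 !subrr mulr0 subr0 in H.
apply/eqP; rewrite eq_sym -subr_eq0; move/eqP: H.
by rewrite !mulf_eq0 (negbTE (neq0Ci C)) pnatr_eq0.
Qed.
Lemma sum_rank (C : numClosedFieldType) (X : finType) (F : 'I_#|X| -> C) :
  \sum_(x : X) F (enum_rank x) = \sum_(i < #|X|) F i.
Proof.
rewrite (reindex (@enum_rank X)) //=.
apply: onW_bij; exact: enum_rank_bij.
Qed.

Lemma sum_rank2 (C : numClosedFieldType) (X : finType) (F : 'I_#|{: X}| -> C) :
  \sum_(i < #|{: X}|) F i = \sum_(x : X) F (enum_rank x).
Proof. exact: esym (sum_rank F). Qed.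

Lemma factor (C : numClosedFieldType) (I J : finType) (E : op C I J) :
  psd E -> exists W : op C I J,
    (forall x y, E (x,y) = \sum_a W (x,a) * (W (y,a))^*) /\
    (pd E -> exists K : op C I J,
        forall x y, \sum_a K (x,a) * (W (y,a))^* = (x == y)%:R).
Proof.
move=> hE.
pose A : 'M[C]_#|{: (I * J)%type}| := \matrix_(i, j) E (enum_val i, enum_val j).
have Ah : A \is hermsymmx.
  apply/is_hermitianmxP; rewrite expr0 scale1r; apply/matrixP => i j.
  by rewrite !mxE (psd_herm hE).
have /orthomx_spectralP Aeq := hermitian_normalmx Ah.
set P := spectralmx A in Aeq; set d := spectral_diag A in Aeq.
have Pu : P \is unitarymx by apply: spectral_unitarymx.
have PPt : P *m P^t* = 1%:M by apply/unitarymxP.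
have PtP : P^t* *m P = 1%:M by rewrite -invmx_unitary // mulVmx // unitarymx_unit.
rewrite invmx_unitary // in Aeq.
have Aent i j : A i j = \sum_l (P l i)^* * d 0 l * P l j.
  rewrite Aeq !mxE; apply: eq_bigr => l _; rewrite mul_mx_diag !mxE //.
have Dent : P *m A *m P^t* = diag_mx d.
  by rewrite Aeq !mulmxA PPt mul1mx -mulmxA PPt mulmx1.
pose v l : vec C I J := [ffun x => (P l (enum_rank x))^*].
have dform l : d 0 l = inner (v l) (apply E (v l)).
  move/matrixP/(_ l l): Dent; rewrite -mulmxA [in X in _ = X -> _]mxE eqxx mulr1n => <-.
  rewrite /inner mxE sum_rank2; apply: eq_bigr => x _.
  rewrite mxE /v !ffunE conjCK sum_rank2 !mulr_sumr.
  apply: eq_bigr => y _; rewrite !ffunE !mxE !enum_rankK.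
  done.
have dge0 l : 0 <= d 0 l by rewrite dform; apply: hE.
pose s l := sqrtC (d 0 l).
have ss l : (s l)^* * s l = d 0 l.
  by rewrite geC0_conj ?sqrtC_ge0 // -expr2 sqrtCK.
exists [ffun p => (P (enum_rank p.2) (enum_rank p.1))^* * s (enum_rank p.2)].
split.
  move=> x y.
  have -> : E (x,y) = A (enum_rank x) (enum_rank y) by rewrite mxE !enum_rankK.
  rewrite Aent sum_rank2; apply: eq_bigr => a _; rewrite !ffunE /=.
  rewrite rmorphM /= conjCK -(ss (enum_rank a)); ring.
move=> hpd.
have vnz l : v l != 0.
  apply/eqP => h0.
  move/matrixP/(_ l l): PPt; rewrite !mxE eqxx big1 ?(@oner_eq0 C) //.
    by move=> /esym/eqP; rewrite oner_eq0.
  move=> j _; have := congr1 (fun f : vec C I J => f (enum_val j)) h0.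
  rewrite /v !ffunE enum_valK => /eqP; rewrite conjC_eq0 => /eqP ->.
  by rewrite mul0r.
have snz l : s l != 0.
  by rewrite sqrtC_eq0 dform; apply: lt0r_neq0; apply: hpd.
exists [ffun p => (P (enum_rank p.2) (enum_rank p.1))^* / s (enum_rank p.2)].
move=> x y.
move/matrixP/(_ (enum_rank x) (enum_rank y)): PtP.
rewrite !mxE (inj_eq enum_rank_inj) sum_rank2 => <-; apply: eq_bigr => a _.
rewrite !ffunE !mxE /= rmorphM /= conjCK (@geC0_conj _ (s (enum_rank a))) ?sqrtC_ge0 ?dge0 //.
by field; apply: snz.
Qed.
Definition optens (C : numClosedFieldType) (I J : finType) (k : nat) (M : op C I J) :
  op C {ffun 'I_k -> I} {ffun 'I_k -> J} :=
  [ffun p : (({ffun 'I_k -> I} * {ffun 'I_k -> J}) * ({ffun 'I_k -> I} * {ffun 'I_k -> J}))%type =>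
     \prod_(t < k) M ((p.1.1 t, p.1.2 t), (p.2.1 t, p.2.2 t))].

Lemma sum_prod (C : numClosedFieldType) (I J : finType) (k : nat) (F : 'I_k -> I * J -> C) :
  \sum_(y : {ffun 'I_k -> I} * {ffun 'I_k -> J}) \prod_t F t (y.1 t, y.2 t)
  = \prod_t \sum_(q : I * J) F t q.
Proof.
rewrite -(pair_bigA _ (fun (a : {ffun 'I_k -> I}) (b : {ffun 'I_k -> J}) => \prod_t F t (a t, b t))) /=.
rewrite (eq_bigr (fun t => \sum_i \sum_j F t (i, j))); last first.
  by move=> t _; rewrite pair_bigA; apply: eq_bigr => -[].
rewrite bigA_distr_bigA /=; apply: eq_bigr => a _.
by rewrite bigA_distr_bigA.
Qed.

Lemma optens_mul (C : numClosedFieldType) (I J : finType) (k : nat) (A B : op C I J) x z :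
  \sum_y optens k A (x, y) * optens k B (y, z) =
  optens k [ffun p => \sum_q A (p.1, q) * B (q, p.2)] (x, z).
Proof.
rewrite ffunE /=.
under eq_bigr => y _ do rewrite !ffunE /= -big_split /=.
rewrite (sum_prod (fun t q => A ((x.1 t, x.2 t), q) * B (q, (z.1 t, z.2 t)))).
by apply: eq_bigr => t _; rewrite ffunE.
Qed.

Lemma optens_delta (C : numClosedFieldType) (I J : finType) (k : nat) x z :
  optens k ([ffun p => (p.1 == p.2)%:R] : op C I J) (x, z) = (x == z)%:R.
Proof.
rewrite ffunE /=.
have [<-|nxz] := eqVneq x z.
  by apply: big1 => t _; rewrite ffunE /= eqxx.
have [t ht] : exists t, (x.1 t, x.2 t) != (z.1 t, z.2 t).
  apply/existsP; apply: contraR nxz; rewrite negb_exists => /forallP h.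
  case: x z h => [a b] [c d] /= h.
  have h' t : (a t, b t) = (c t, d t) by apply/eqP; have := h t; rewrite negbK.
  apply/eqP; congr pair; apply/ffunP => t; have := h' t; case => //.
by rewrite (bigD1 t) //= ffunE /= (negbTE ht) mul0r.
Qed.

Lemma optens_adj (C : numClosedFieldType) (I J : finType) (k : nat) (M : op C I J) y z :
  optens k [ffun p => (M (p.2, p.1))^*] (y, z) = (optens k M (z, y))^*.
Proof.
rewrite !ffunE rmorph_prod /=; apply: eq_bigr => t _; by rewrite ffunE.
Qed.
Lemma key (C : numClosedFieldType) (I J : finType) (L K W F T : op C I J) :
 (forall x y, T (x,y) = \sum_a L (x,a) * (L (y,a))^*) ->
 (forall x y, \sum_a K (x,a) * (L (y,a))^* = (x == y)%:R) ->
 (forall x y, F (x,y) = \sum_b W (x,b) * (W (y,b))^*) ->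
 \sum_p (T p)^* * F p = 0 -> F = 0.
Proof.
move=> hT hK hF h0.
pose c a b := \sum_z (L (z,a))^* * W (z,b).
have e : \sum_p (T p)^* * F p = \sum_a \sum_b c a b * (c a b)^*.
  transitivity (\sum_z \sum_x \sum_a \sum_b
      ((L (z,a))^* * W (z,b)) * ((L (x,a))^* * W (x,b))^*).
    rewrite (eq_bigr (fun p => (T (p.1, p.2))^* * F (p.1, p.2))); last by case.
    rewrite -(pair_bigA _ (fun z x => (T (z, x))^* * F (z, x))) /=; apply: eq_bigr => z _; apply: eq_bigr => x _.
    rewrite hT hF rmorph_sum /= mulr_suml; apply: eq_bigr => a _.
    rewrite mulr_sumr; apply: eq_bigr => b _.
    rewrite !rmorphM /= !conjCK; ring.
  under eq_bigr => z _ do rewrite exchange_big /=.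
  rewrite [LHS]exchange_big /=; apply: eq_bigr => a _.
  under eq_bigr => z _ do rewrite exchange_big /=.
  rewrite [LHS]exchange_big /=; apply: eq_bigr => b _.
  rewrite /c rmorph_sum /= mulr_suml; apply: eq_bigr => z _.
  by rewrite mulr_sumr.
rewrite e in h0.
have c0 a b : c a b = 0.
  move/eqP: h0; rewrite psumr_eq0 => [/allP h|a' _]; last first.
    by apply: sumr_ge0 => b' _; apply: mul_conjC_ge0.
  have := h a (mem_index_enum a); rewrite psumr_eq0 => [/allP h'|b' _]; last first.
    exact: mul_conjC_ge0.
  by have := h' b (mem_index_enum b); rewrite mul_conjC_eq0 => /eqP.
apply/ffunP => -[x y]; rewrite ffunE hF big1 // => b _.
suff -> : W (x,b) = 0 by rewrite mul0r.
transitivity (\sum_a K (x,a) * c a b); last first.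
  by rewrite big1 // => a _; rewrite c0 mulr0.
transitivity (\sum_z (\sum_a K (x,a) * (L (z,a))^*) * W (z,b)).
  under eq_bigr => z _ do rewrite hK.
  rewrite (bigD1 x) //= eqxx mul1r big1 ?addr0 // => z nz.
  by rewrite eq_sym (negbTE nz) mul0r.
rewrite /c; under eq_bigr => z _ do rewrite mulr_suml.
rewrite exchange_big /=; apply: eq_bigr => a _; rewrite mulr_sumr.
by apply: eq_bigr => z _; ring.
Qed.

Lemma pd_psd (C : numClosedFieldType) (I J : finType) (E : op C I J) : pd E -> psd E.
Proof.
move=> h v; have [->|nz] := eqVneq v 0; last exact: ltW (h v nz).
by rewrite /inner big1 // => x _; rewrite ffunE conjC0 mul0r.
Qed.

Lemma ptrans_invol (C : numClosedFieldType) (I J : finType) (E : op C I J) :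
  ptrans (ptrans E) = E.
Proof. by apply/ffunP => -[[i j] [k l]]; rewrite !ffunE. Qed.

Lemma phi_ptrans (C : numClosedFieldType) (I J : finType) (A B : op C I J) :
  \sum_p (ptrans A p)^* * ptrans B p = \sum_p (A p)^* * B p.
Proof.
pose sw (p : ((I * J) * (I * J))%type) := (((p.1).1, (p.2).2), ((p.2).1, (p.1).2)).
have swK : involutive sw by case=> [[i j] [k l]].
rewrite [RHS](reindex_inj (inv_inj swK)) /=.
by apply: eq_bigr => -[[i j] [k l]] _; rewrite !ffunE.
Qed.

Lemma optens_ptrans (C : numClosedFieldType) (I J : finType) (k : nat) (M : op C I J) :
  optens k (ptrans M) = ptrans (optens k M).
Proof.
apply/ffunP => -[[a b] [c d]]; rewrite !ffunE /=; apply: eq_bigr => t _.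
by rewrite ffunE.
Qed.

Theorem lemma2 (C : numClosedFieldType) (I J : finType)
  (S : vec C I J -> Prop) (hS : is_subspace S)
  (sigma : op C I J) (hsigma : PPT_definite sigma)
  (hsupp : forall w, supp sigma w -> S w) :
  strongly_PPT_unextendible S.
Proof.
move=> k _ [E [Enz [[hE hEt] horth]]].
case: hsigma => hs hst.
have [L0 [hL0 hK0']] := factor (pd_psd hst).
have [K0 hK0] := hK0' hst.
have [W [hW _]] := factor hEt.
have Fz : ptrans E = 0.
  apply: (@key _ _ _ (optens k L0) (optens k K0) W (ptrans E) (optens k (ptrans sigma))).
  - move=> x y; move: hL0; move: (ptrans sigma) => T0 hL0; under eq_bigr => a _ do rewrite -optens_adj.
    rewrite optens_mul !ffunE; apply: eq_bigr => t _.
    rewrite !ffunE hL0; apply: eq_bigr => q _; by rewrite ffunE.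
  - move=> x y; under eq_bigr => a _ do rewrite -optens_adj.
    rewrite optens_mul.
    have -> : [ffun p => \sum_q K0 (p.1, q) * [ffun p0 => (L0 (p0.2, p0.1))^*] (q, p.2)]
              = [ffun p => (p.1 == p.2)%:R] :> op C I J.
      apply/ffunP => -[x' y']; rewrite !ffunE /= -hK0.
      by apply: eq_bigr => q _; rewrite ffunE.
    exact: optens_delta.
  - exact: hW.
  rewrite optens_ptrans phi_ptrans.
  rewrite (eq_bigr (fun p => (optens k sigma (p.1,p.2))^* * E (p.1,p.2))); last by case.
  rewrite -(pair_bigA _ (fun z x => (optens k sigma (z,x))^* * E (z,x))) /= exchange_big /=.
  apply: big1 => x _.
  pose col : vec C {ffun 'I_k -> I} {ffun 'I_k -> J} := [ffun z => optens k sigma (z, x)].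
  pose dx : vec C {ffun 'I_k -> I} {ffun 'I_k -> J} := [ffun y => (y == x)%:R].
  have hcol : tpow k S col.
    pose vs t : vec C I J := apply sigma [ffun y => (y == (x.1 t, x.2 t))%:R].
    exists [:: (1, tens vs)]; split.
      move=> p; rewrite inE => /eqP -> /=; exists vs; split => // t.
      by apply: hsupp; eexists.
    rewrite big_seq1 /=; apply/ffunP => z; rewrite /col /scalv !ffunE mul1r /=.
    apply: eq_bigr => t _; rewrite /vs !ffunE (bigD1 (x.1 t, x.2 t)) //= ffunE eqxx mulr1.
    rewrite big1 ?addr0 // => y ny; by rewrite ffunE (negbTE ny) mulr0.
  have := horth (apply E dx) (ex_intro _ dx erefl) col hcol.
  move=> h; transitivity (inner col (apply E dx)); last exact: h.
  rewrite /inner; apply: eq_bigr => z _; rewrite /col /apply !ffunE; congr (_ * _).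
  rewrite (bigD1 x) //= ffunE eqxx mulr1 big1 ?addr0 // => y ny.
  by rewrite ffunE (negbTE ny) mulr0.
move/eqP: Enz; apply; rewrite -(ptrans_invol E) Fz.
by apply/ffunP => p; rewrite !ffunE.
Qed.
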